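(* Let $G$ be a finite group with $|G|>1$, let $p$ be the largest prime divisor of $|G|$, and suppose there exists $x\in G$ with $[G:\langle x\rangle]<2p$. Then one of the following holds: (i) $G$ has a normal cyclic Sylow $p$-subgroup; (ii) $G$ is solvable and $\langle x\rangle$ is a maximal subgroup of $G$ of index either $p$ or $p+1$. *)

(* Defs.v *)
From HB Require Import structures.
From mathcomp Require Import all_boot all_order all_fingroup all_solvable.
Set Implicit Arguments. Unset Strict Implicit. Unset Printing Implicit Defensive.

(* Main.v *)
Require Import Defs.
From HB Require Import structures.
From mathcomp Require Import all_boot all_order all_fingroup all_solvable.
From mathcomp Require vcharacter.
From mathcomp Require Import zify.
Set Implicit Arguments. Unset Strict Implicit. Unset Printing Implicit Defensive.
Lemma ar1 (p s m : nat) : 1 < p -> s %% p = 1%N -> s != 1%N -> 0 < m -> (s * m < 2 * p)%N -> s = p.+1 /\ m = 1%N.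
Proof.
move=> p1 sm s1 m0 lt.
have hs : s = s %/ p * p + 1 by rewrite {1}(divn_eq s p) sm.
move: (s %/ p) hs => q hs; subst s.
have q1 : q = 1 by move/eqP: s1 => s1; nia.
subst q; split; nia.
Qed.
Lemma ar2 (p t u : nat) : 1 < p -> t %% p = 1%N -> (u * t)%N = p.+1 -> t = 1%N \/ u = 1%N.
Proof.
move=> p1 tm e.
have hs : t = t %/ p * p + 1 by rewrite {1}(divn_eq t p) tm.
move: (t %/ p) hs => q hs; subst t.
have [->|q0] := posnP q; first by left.
right; nia.
Qed.

Import GroupScope.

Section S.
Variable gT : finGroupType.
Implicit Types G H K P Q : {group gT}.

Lemma core_TI G H g : abelian H -> maximal H G -> g \in G -> H :^ g != H ->
  H :&: H :^ g \subset gcore H G.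
Proof.
move=> abH maxH Gg neq; apply/subsetP => x /setIP[Hx Hgx].
have sHG : H \subset G by apply: proper_sub (maxgroupp maxH).
have sHgG : H :^ g \subset G by rewrite sub_conjg conjGid ?groupV.
have defM : H <*> H :^ g = G.
  case/maxgroupP: maxH => _ mx.
  have sMG : H <*> H :^ g \subset G by rewrite join_subG sHG.
  have [prM|] := boolP ((H <*> H :^ g)%G \proper G).
    have := mx _ prM (joing_subl _ _) => /= eqM.
    have : H :^ g \subset H by rewrite -{2}eqM joing_subr.
    move=> sHgH; case/negP: neq; rewrite eqEcard sHgH cardJg leqnn //.
  by rewrite properEneq sMG andbT negbK => /eqP.
have cGx : G \subset 'C[x].
  rewrite -defM join_subG !sub_cent1 (subsetP abH) //.
  by have := abelianJ H g; rewrite abH => /subsetP->.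
rewrite /gcore; apply/bigcapP => y Gy; rewrite mem_conjg.
have cxy : y^-1 \in 'C[x] by rewrite (subsetP cGx) ?groupV.
by move/cent1P: cxy => cxy; rewrite /conjg -cxy mulKg.
Qed.

Lemma frob_quot G H : abelian H -> maximal H G -> 'N_G(H) \subset H ->
  [Frobenius G / gcore H G with complement H / gcore H G].
Proof.
move=> abH maxH snH; set N := gcore H G.
have prHG := maxgroupp maxH; have sHG := proper_sub prHG.
have nsNG : N <| G by apply: gcore_normal.
have sNH : N \subset H by apply: gcore_sub.
have nNG := normal_norm nsNG; have nNH := subset_trans sHG nNG.
have iHG : #|G / N : H / N| = #|G : H|.
  by rewrite index_quotient_eq // subIset // sNH orbT.
have ltHG : 1 < #|G : H| by rewrite indexg_gt1; case/andP: prHG.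
apply/andP; split.
  by apply: contraTneq ltHG => eqHG; rewrite -iHG eqHG indexgg.
apply/normedTI_memJ_P; split.
- rewrite setD_eq0 quotient_sub1 //; apply: contraTN ltHG => sHN.
  have eHN : H :=: N by apply/eqP; rewrite eqEsubset sHN.
  have nHG : G \subset 'N(H) by rewrite eHN.
  have sGH : G \subset H by apply: subset_trans snH; rewrite subsetI subxx.
  by rewrite indexg_gt1 negbK.
- exact: quotientS.
move=> a gb /setD1P[nta Ha] Ggb; apply/idP/idP; last first.
  by move=> Hgb; rewrite !inE conjg_eq1 nta groupJ.
case/setD1P=> _ Hag; case/morphimP: Ggb => g Ng Gg def_gb.
have [Hg|H'g] := boolP (g \in H); first by rewrite def_gb mem_quotient.
have Gg' : g^-1 \in G by rewrite groupV.
have neq : H :^ g^-1 != H.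
  apply: contra H'g => /eqP eHg.
  have : g^-1 \in 'N_G(H) by rewrite inE Gg' /=; apply/normP.
  by move/(subsetP snH); rewrite groupV.
have := core_TI abH maxH Gg' neq => sI.
have : a \in (H :&: H :^ g^-1) / N.
  rewrite quotientGI // quotientJ ?(subsetP nNG) // inE Ha /=.
  by rewrite mem_conjg (morphV _ Ng) invgK -def_gb.
move/(subsetP (quotientS N sI)); rewrite trivg_quotient inE => /eqP a1.
by rewrite a1 eqxx in nta.
Qed.

Lemma frob_sol (X Y : {group gT}) : [Frobenius X with complement Y] -> abelian Y ->
  prime #|X : Y| \/ prime (#|X : Y|.-1) -> solvable X.
Proof.
move=> frobXY abY hyp.
have [K frobK] := vcharacter.Frobenius_kernel_exists frobXY.
have [defX ntK ntY _ _] := Frobenius_context frobK.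
have cardK : #|K| = #|X : Y|.
  have [_ sYX] := mulG_sub (sdprodW defX).
  by rewrite -divgS // -(sdprod_card defX) mulnK.
have nsKX : K <| X by case/sdprod_context: defX.
rewrite (series_sol nsKX); apply/andP; split; last first.
  have [_ defKY _ _] := sdprodP defX.
  rewrite -defKY quotientMidl; exact/quotient_sol/abelian_sol.
case: hyp => [prK | prK1].
  by apply/abelian_sol/cyclic_abelian/prime_cyclic; rewrite cardK.
have eqK : #|X : Y| = #|Y|.+1.
  have dv := Frobenius_dvd_ker1 frobK; rewrite cardK in dv.
  have gt0 : 0 < #|X : Y| by apply: indexg_gt0.
  case/primeP: (prK1) => _ /(_ _ dv) /orP[/eqP Y1 | /eqP eY].
    by move: ntY; rewrite trivg_card1 Y1.
  by rewrite eY prednK.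
have regY := Frobenius_reg_compl frobK.
have [sKX sYX] := mulG_sub (sdprodW defX).
have nKX := normal_norm nsKX.
have cK1 : #|K^#| = #|Y|.
  by have := cardsD1 1 K; rewrite group1 cardK eqK add1n => -[].
have orb : forall k, k \in K^# -> orbit 'J Y k = K^#.
  move=> k Kk; apply/eqP; rewrite eqEcard; apply/andP; split.
    apply/subsetP => _ /orbitP[y Yy <-]; case/setD1P: Kk => ntk Kk.
    by rewrite !inE /= conjg_eq1 ntk memJ_norm // (subsetP nKX) ?(subsetP sYX).
  by rewrite card_orbit astab1J regY // indexg1 cK1.
have ordE : forall k1 k2, k1 \in K^# -> k2 \in K^# -> #[k2] = #[k1].
  move=> k1 k2 K1 K2; move: K2; rewrite -(orb _ K1) => /orbitP[y _ <-].
  by rewrite orderJ.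
have gt1 : 1 < #|K| by rewrite cardG_gt1.
have [k Kk ok] := Cauchy (pdiv_prime gt1) (pdiv_dvd _).
have K1k : k \in K^#.
  rewrite !inE Kk andbT; apply/eqP => k1; move: (pdiv_prime gt1).
  by rewrite -ok k1 order1.
apply: (@pgroup_sol _ (pdiv #|K|)); apply/pgroupP => r pr rK.
have [k' Kk' ok'] := Cauchy pr rK.
have K1k' : k' \in K^#.
  rewrite !inE Kk' andbT; apply/eqP => k1; move: pr.
  by rewrite -ok' k1 order1.
by rewrite inE -ok' (ordE _ _ K1k K1k') ok.
Qed.

Lemma max_index G H : H \proper G ->
  (forall M : {group gT}, H \subset M -> M \subset G -> #|M : H| = 1%N \/ #|G : M| = 1%N) ->
  maximal H G.
Proof.
move=> prHG hyp; apply/maxgroupP; split=> // M prMG sHM.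
have sMG := proper_sub prMG.
case: (hyp M sHM sMG) => [iMH | iGM].
  by apply/eqP; rewrite eq_sym eqEcard sHM -(Lagrange sHM) iMH muln1 leqnn.
by move: prMG; rewrite properEneq (index1g sMG iGM) eqxx.
Qed.
End S.

Lemma sol_main (gT : finGroupType) (G H : {group gT}) : abelian H -> maximal H G -> 'N_G(H) \subset H ->
  prime #|G : H| \/ prime (#|G : H|.-1) -> solvable G.
Proof.
move=> abH maxH snH hyp; set N := gcore H G.
have sHG := proper_sub (maxgroupp maxH).
have nsNG : N <| G by apply: gcore_normal.
have sNH : N \subset H by apply: gcore_sub.
have nNG := normal_norm nsNG.
rewrite (series_sol nsNG) (abelian_sol (abelianS sNH abH)) /=.
have := frob_sol (frob_quot abH maxH snH) (quotient_abelian _ abH); apply.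
by rewrite index_quotient_eq ?(subset_trans (subsetIr _ _) sNH).

Qed.



Theorem proposition2p5 (gT : finGroupType) (G : {group gT}) (x : gT) :
  1 < #|G| ->
  x \in G ->
  #|G : <[x]>| < 2 * max_pdiv #|G| ->
  (exists2 P : {group gT}, P \in 'Syl_(max_pdiv #|G|)(G) & (P <| G) && cyclic P)
  \/
  [/\ solvable G, maximal <[x]> G &
      (#|G : <[x]>| == max_pdiv #|G|) || (#|G : <[x]>| == (max_pdiv #|G|).+1)].
Proof.
move=> G1 xG iH.
set p := max_pdiv #|G|.
have pr_p : prime p by apply: max_pdiv_prime.
have p_gt1 : 1 < p by apply: prime_gt1.
set H := <[x]>%G.
have sHG : H \subset G by rewrite cycle_subG.
have abH : abelian H by apply: cycle_abelian.
have n_gt0 : 0 < #|G : H| by apply: indexg_gt0.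
have [pn | p'n] := boolP (p %| #|G : H|).
  have nE : #|G : H| = p.
    case/dvdnP: pn => k ek; rewrite ek in iH n_gt0 *.
    have : k = 1%N by nia.
    by move=> ->; rewrite mul1n.
  have prHG : H \proper G by rewrite properE sHG -indexg_gt1 nE.
  have maxH : maximal H G.
    apply: max_index => // M sHM sMG.
    have e := Lagrange_index sMG sHM; rewrite nE in e.
    have dv : #|M : H| %| p by rewrite -e dvdn_mull.
    case/primeP: pr_p => _ /(_ _ dv) /orP[/eqP -> | /eqP eq]; first by left.
    by right; rewrite eq in e; nia.
  right; split=> //; last by rewrite nE eqxx.
  have [snH|nsn] := boolP ('N_G(H) \subset H).
    by apply: (sol_main abH maxH snH); left; rewrite nE.
  have nHG : G \subset 'N(H).
    case/maxgroupP: (maxH) => _ mx.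
    have sHN : H \subset 'N_G(H) by rewrite subsetI sHG normG.
    have [prN|] := boolP ('N_G(H)%G \proper G).
      by move: nsn; rewrite (mx _ prN sHN) subxx.
    rewrite properEneq subsetIl andbT negbK => /eqP eN.
    by rewrite -{1}eN subsetIr.
  have nsHG : H <| G by rewrite /normal sHG nHG.
  rewrite (series_sol nsHG) (abelian_sol abH) /=.
  by apply/abelian_sol/cyclic_abelian/prime_cyclic; rewrite card_quotient // nE.
set P := 'O_p(H)%G.
have sPH : P \subset H by apply: pcore_sub.
have hallPH : p.-Hall(H) P := nilpotent_pcore_Hall p (abelian_nil abH).
have sylP : p.-Sylow(G) P.
  rewrite /pHall (subset_trans sPH sHG) pcore_pgroup /=.
  rewrite -(Lagrange_index sHG sPH) pnatM (p'natE _ pr_p) p'n /=.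
  by case/and3P: hallPH.
have cycP : cyclic P := cyclicS sPH (cycle_cyclic x).
have nPH : H \subset 'N(P) by apply: normal_norm; apply: pcore_normal.
have sHN : H \subset 'N_G(P) by rewrite subsetI sHG nPH.
have sNG : 'N_G(P) \subset G := subsetIl _ _.
have e := Lagrange_index sNG sHN.
have smod : #|G : 'N_G(P)| %% p = 1%N by rewrite -(card_Syl sylP) card_Syl_mod.
have [s1|s1] := eqVneq #|G : 'N_G(P)| 1%N.
  left; exists P; first by rewrite inE.
  rewrite /normal (pHall_sub sylP) cycP andbT /=.
  by rewrite -(index1g sNG s1) subsetIr.
have m_gt0 : 0 < #|'N_G(P) : H| by apply: indexg_gt0.
have [sE mE] : #|G : 'N_G(P)| = p.+1 /\ #|'N_G(P) : H| = 1%N.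
  by apply: ar1 => //; rewrite e.
have eN : H :=: 'N_G(P) := index1g sHN mE.
have nE : #|G : H| = p.+1 by rewrite -e sE mE muln1.
have prHG : H \proper G by rewrite properE sHG -indexg_gt1 nE ltnS ltnW.
have maxH : maximal H G.
  apply: max_index => // M sHM sMG.
  have sylM : p.-Sylow(M) P := pHall_subl (subset_trans sPH sHM) sMG sylP.
  have eNM : 'N_M(P) = H.
    apply/eqP; rewrite eqEsubset subsetI sHM nPH andbT.
    by rewrite eN setSI.
  have tmod := card_Syl_mod M pr_p.
  rewrite (card_Syl sylM) eNM in tmod.
  have eM := Lagrange_index sMG sHM; rewrite nE in eM.
  have t_gt0 : 0 < #|M : H| by apply: indexg_gt0.
  exact: ar2 p_gt1 tmod eM.
right; split=> //; last by rewrite nE eqxx orbT.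
apply: (sol_main abH maxH); last by right; rewrite nE.
rewrite {2}eN subsetI subsetIl /=.
exact: subset_trans (subsetIr _ _) (char_norms (pcore_char p H)).
Qed.
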